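(* Let $\alpha>2$ with $\alpha\notin\mathbb N$ and $\lfloor\alpha\rfloor$ even. Let $K_\alpha=\{\exp(2\ell\pi i/\alpha): \ell\in\mathbb Z,\ -\alpha/2<\ell\le \alpha/2\}$. Then for all $\lambda\in[\tfrac12,1]$ and $k\in\mathbb N$, \[ \sum_{\omega\in K_\alpha}(1+\lambda\omega)^{\alpha k}\le \alpha(1+\lambda)^{\alpha k}, \] where the (real-valued) left-hand side uses the principal branch $z^{\alpha k}=\exp(\alpha k\operatorname{Log} z)$. *)

(* Defs.v *)
From Stdlib Require Import Reals Lra ZArith List.
From Coquelicot Require Import Coquelicot.
Open Scope R_scope.

Definition Cexp (z : C) : C :=
  (exp (Re z) * cos (Im z), exp (Re z) * sin (Im z)).

(* Principal argument in (-PI, PI] (standard atan2), 0 at z = 0. *)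
Definition Arg (z : C) : R :=
  let x := Re z in let y := Im z in
  if Rlt_dec 0 x then atan (y / x)
  else if Rlt_dec x 0 then
         (if Rle_dec 0 y then atan (y / x) + PI else atan (y / x) - PI)
  else if Rlt_dec 0 y then PI / 2
  else if Rlt_dec y 0 then - (PI / 2)
  else 0.

Definition Log (z : C) : C := (ln (Cmod z), Arg z).

Definition Cpow (z w : C) : C := Cexp (Cmult w (Log z)).

Definition K_idx (alpha : R) : list Z :=
  let N := up alpha in
  filter (fun l : Z =>
            if Rlt_dec (- (alpha / 2)) (IZR l) then
              (if Rle_dec (IZR l) (alpha / 2) then true else false)
            else false)
         (map (fun n : nat => (Z.of_nat n - N)%Z) (seq 0 (Z.to_nat (2 * N + 1)))).

Definition omega (alpha : R) (l : Z) : C :=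
  Cexp (0, 2 * IZR l * PI / alpha).

Definition K_sum (alpha lambda : R) (k : nat) : C :=
  fold_right Cplus (RtoC 0)
    (map (fun l => Cpow (Cplus (RtoC 1) (Cmult (RtoC lambda) (omega alpha l)))
                        (RtoC (alpha * INR k)))
         (K_idx alpha)).

(* Main.v *)
Require Import Defs.
From Stdlib Require Import Reals Lra Lia ZArith List Permutation.
From Coquelicot Require Import Coquelicot.
Open Scope R_scope.

Lemma z_form lam th :
  Cplus (RtoC 1) (Cmult (RtoC lam) (Defs.Cexp (0, th))) = (1 + lam * cos th, lam * sin th).
Proof. unfold Cplus, Cmult, Defs.Cexp, RtoC; simpl. rewrite exp_0. f_equal; ring. Qed.

Lemma pow_form a x y : 0 < x ->
  Defs.Cpow (x, y) (RtoC a) =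
  (exp (a * ln (sqrt (x^2+y^2))) * cos (a * atan (y/x)),
   exp (a * ln (sqrt (x^2+y^2))) * sin (a * atan (y/x))).
Proof.
  intro Hx. unfold Defs.Cpow, Defs.Cexp, Cmult, Defs.Log, Defs.Arg, Cmod, RtoC; simpl.
  destruct (Rlt_dec 0 x) as [_|n]; [|lra].
  f_equal; f_equal; f_equal; ring.
Qed.

Lemma exp_le x y : x <= y -> exp x <= exp y.
Proof. intro H. destruct (Rle_lt_or_eq_dec _ _ H) as [h|h].
  left; apply exp_increasing; exact h. subst; lra. Qed.

Lemma mod_sq lam th :
  (1 + lam * cos th)^2 + (lam * sin th)^2 = 1 + 2 * lam * cos th + lam^2.
Proof.
  pose proof (sin2_cos2 th) as H. unfold Rsqr in H. nra.
Qed.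

Lemma ln_sqrt' s : 0 < s -> ln (sqrt s) = ln s / 2.
Proof.
  intro Hs. rewrite <- (sqrt_sqrt s) at 2 by lra.
  rewrite ln_mult by (apply sqrt_lt_R0; lra). field.
Qed.

Lemma re_exp_bound a x y : 0 < x ->
  Re (Defs.Cpow (x, y) (RtoC a)) <= exp (a * ln (sqrt (x^2+y^2))).
Proof.
  intro Hx. rewrite pow_form by exact Hx. unfold Re; cbn [fst].
  pose proof (COS_bound (a * atan (y/x))) as [_ Hc].
  pose proof (exp_pos (a * ln (sqrt (x ^ 2 + y ^ 2)))).
  set (E := exp _) in *. set (c := cos _) in *.
  assert (E * c <= E * 1) by (apply Rmult_le_compat_l; lra). lra.
Qed.

Lemma Re_le_B a lam th : 0 <= a -> 1/2 <= lam <= 1 -> -1 < cos th ->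
  Re (Defs.Cpow (1 + lam * cos th, lam * sin th) (RtoC a)) <= exp (a * ln (1 + lam)).
Proof.
  intros Ha Hl Hc. pose proof (COS_bound th) as [_ Hc1].
  assert (Hx : 0 < 1 + lam * cos th) by nra.
  eapply Rle_trans; [apply re_exp_bound; exact Hx|].
  rewrite mod_sq. assert (Hs : 0 < 1 + 2*lam*cos th + lam^2) by nra.
  rewrite ln_sqrt' by exact Hs.
  apply exp_le. apply Rmult_le_compat_l; [exact Ha|].
  assert (ln (1 + 2 * lam * cos th + lam ^ 2) <= ln ((1+lam)*(1+lam))).
  { apply ln_le; [exact Hs|].
    assert (0 <= lam * (1 - cos th)) by (apply Rmult_le_pos; lra). nra. }
  rewrite ln_mult in H by lra. lra.
Qed.

Lemma Re_le_B3 a lam th : 2 <= a -> 1/2 <= lam <= 1 -> -1 < cos th -> cos th <= -1/2 ->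
  Re (Defs.Cpow (1 + lam * cos th, lam * sin th) (RtoC a)) <= exp (a * ln (1 + lam)) / 3.
Proof.
  intros Ha Hl Hc Hc2.
  assert (Hx : 0 < 1 + lam * cos th) by nra.
  eapply Rle_trans; [apply re_exp_bound; exact Hx|].
  rewrite mod_sq. assert (Hs : 0 < 1 + 2*lam*cos th + lam^2) by nra.
  rewrite ln_sqrt' by exact Hs.
  assert (H : ln (1 + 2 * lam * cos th + lam ^ 2) <= ln ((1+lam)*(1+lam)*/3)).
  { apply ln_le; [exact Hs| nra]. }
  rewrite !ln_mult in H by (try apply Rinv_0_lt_compat; nra).
  rewrite ln_Rinv in H by lra.
  assert (H3 : 0 < ln 3). { rewrite <- ln_1. apply ln_increasing; lra. }
  replace (exp (a * ln (1 + lam)) / 3) with (exp (a * ln (1 + lam) - ln 3)).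
  2:{ unfold Rminus. rewrite exp_plus, exp_Ropp, exp_ln by lra. field. }
  apply exp_le. nra.
Qed.

Lemma Im_odd a lam th : 0 < 1 + lam * cos th ->
  Im (Defs.Cpow (1 + lam * cos (-th), lam * sin (-th)) (RtoC a)) =
  - Im (Defs.Cpow (1 + lam * cos th, lam * sin th) (RtoC a)).
Proof.
  intro Hx. rewrite cos_neg, sin_neg. rewrite !pow_form by exact Hx. unfold Im; cbn [snd].
  replace ((lam * - sin th) ^ 2) with ((lam * sin th)^2) by ring.
  replace (lam * - sin th / (1 + lam * cos th)) with (- (lam * sin th / (1 + lam * cos th))) by (field; lra).
  rewrite atan_opp. replace (a * - atan (lam * sin th / (1 + lam * cos th))) with
    (- (a * atan (lam * sin th / (1 + lam * cos th)))) by ring.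
  rewrite sin_neg. ring.
Qed.

Lemma cos_gt_m1 th : -PI < th < PI -> -1 < cos th.
Proof.
  intro H. pose proof PI_RGT_0.
  assert (Hp : forall t, 0 <= t < PI -> -1 < cos t).
  { intros t Ht. rewrite <- cos_PI. apply cos_decreasing_1; lra. }
  destruct (Rle_dec 0 th). apply Hp; lra.
  rewrite <- cos_neg. apply Hp; lra.
Qed.

Lemma cos_le_half th : 2*PI/3 <= th <= PI -> cos th <= -1/2.
Proof.
  intro H. pose proof PI_RGT_0.
  assert (Hc : cos (2*PI/3) = -1/2).
  { replace (2*PI/3) with (PI - PI/3) by field. rewrite Rtrigo_facts.cos_pi_minus, cos_PI3. lra. }
  destruct (Rle_lt_or_eq_dec _ _ (proj1 H)) as [h|h].
  - rewrite <- Hc. left. apply cos_decreasing_1; lra.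
  - rewrite <- h. lra.
Qed.

Definition Rsum (L : list Z) (f : Z -> R) : R := fold_right (fun l acc => f l + acc) 0 L.

Lemma Re_fold (F : Z -> C) L :
  Re (fold_right Cplus (RtoC 0) (map F L)) = Rsum L (fun l => Re (F l)).
Proof. induction L; simpl; [reflexivity|]. unfold Re in *; simpl. rewrite IHL. reflexivity. Qed.

Lemma Im_fold (F : Z -> C) L :
  Im (fold_right Cplus (RtoC 0) (map F L)) = Rsum L (fun l => Im (F l)).
Proof. induction L; simpl; [reflexivity|]. unfold Im in *; simpl. rewrite IHL. reflexivity. Qed.

Lemma Rsum_perm L1 L2 f : Permutation L1 L2 -> Rsum L1 f = Rsum L2 f.
Proof. induction 1; simpl; try lra. Qed.

Lemma Rsum_le L f g : (forall l, In l L -> f l <= g l) -> Rsum L f <= Rsum L g.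
Proof. induction L; simpl; intros H; [lra|].
  pose proof (H a (or_introl eq_refl)). pose proof (IHL (fun l h => H l (or_intror h))). lra. Qed.

Lemma Rsum_ext L f g : (forall l, In l L -> f l = g l) -> Rsum L f = Rsum L g.
Proof. induction L; simpl; intros H; [lra|].
  rewrite (H a (or_introl eq_refl)), (IHL (fun l h => H l (or_intror h))). lra. Qed.

Lemma Rsum_map L h f : Rsum (map h L) f = Rsum L (fun l => f (h l)).
Proof. induction L; simpl; lra. Qed.

Lemma Rsum_opp L f : Rsum L (fun l => - f l) = - Rsum L f.
Proof. induction L; simpl; lra. Qed.

Lemma Rsum_app L1 L2 f : Rsum (L1 ++ L2) f = Rsum L1 f + Rsum L2 f.
Proof. induction L1; simpl; lra. Qed.

Lemma Rsum_const_le L f B : (forall l, In l L -> f l <= B) -> Rsum L f <= INR (length L) * B.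
Proof. induction L; unfold Rsum in *; cbn [fold_right length]; intros H; [simpl; lra|].
  pose proof (H a (or_introl eq_refl)). pose proof (IHL (fun l h => H l (or_intror h))).
  rewrite S_INR. lra. Qed.

Definition Elist (m : Z) : list Z :=
  map (fun n : nat => (Z.of_nat n - m)%Z) (seq 0 (Z.to_nat (2*m+1))).

Lemma In_E m l : (0 <= m)%Z -> In l (Elist m) <-> (-m <= l <= m)%Z.
Proof.
  intro Hm. unfold Elist. rewrite in_map_iff. split.
  - intros [n [Hn Hin]]. apply in_seq in Hin. lia.
  - intro H. exists (Z.to_nat (l + m)). split; [lia|]. apply in_seq. lia.
Qed.

Lemma inj_sh (m : Z) : FinFun.Injective (fun n : nat => (Z.of_nat n - m)%Z).
Proof. intros x y H. lia. Qed.

Lemma NoDup_E m : NoDup (Elist m).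
Proof. apply FinFun.Injective_map_NoDup; [apply inj_sh|apply seq_NoDup]. Qed.

Lemma NoDup_K a : NoDup (K_idx a).
Proof. unfold K_idx. apply NoDup_filter. apply FinFun.Injective_map_NoDup; [apply inj_sh|apply seq_NoDup]. Qed.

Lemma K_char a m : (0 <= m)%Z -> 2 * IZR m < a < 2 * IZR m + 1 ->
  forall l, In l (K_idx a) <-> (-m <= l <= m)%Z.
Proof.
  intros Hm Ha l. unfold K_idx. rewrite filter_In, in_map_iff.
  destruct (archimed a) as [Hu1 Hu2].
  assert (HmN : (m < up a)%Z). { apply lt_IZR. assert (0 <= IZR m) by (apply IZR_le; lia). lra. }
  split.
  - intros [_ Hf].
    destruct (Rlt_dec _ _) as [h1|h1]; [|discriminate].
    destruct (Rle_dec _ _) as [h2|h2]; [|discriminate].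
    split.
    + assert (IZR (-m-1) < IZR l) by (rewrite minus_IZR, opp_IZR; lra).
      apply lt_IZR in H. lia.
    + assert (IZR l < IZR (m+1)) by (rewrite plus_IZR; lra).
      apply lt_IZR in H. lia.
  - intro H. split.
    + exists (Z.to_nat (l + up a)). split; [lia|]. apply in_seq. lia.
    + assert (H1 : IZR (-m) <= IZR l) by (apply IZR_le; lia).
      assert (H2 : IZR l <= IZR m) by (apply IZR_le; lia).
      rewrite opp_IZR in H1.
      destruct (Rlt_dec _ _) as [h1|h1]; [|lra].
      destruct (Rle_dec _ _) as [h2|h2]; [reflexivity|lra].
Qed.

Lemma piece_le (m : Z) s len f C :
  (forall n, (s <= n < s + len)%nat -> f (Z.of_nat n - m)%Z <= C) ->
  Rsum (map (fun n : nat => (Z.of_nat n - m)%Z) (seq s len)) f <= INR len * C.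
Proof.
  intro H. replace len with (length (map (fun n : nat => (Z.of_nat n - m)%Z) (seq s len))) at 2
    by (rewrite length_map, length_seq; reflexivity).
  apply Rsum_const_le. intros l Hl. apply in_map_iff in Hl. destruct Hl as [n [<- Hn]].
  apply H. apply in_seq in Hn. exact Hn.
Qed.

Theorem lemma6p1 (alpha : R) (Halpha : 2 < alpha)
  (Hnotnat : ~ (exists n : nat, alpha = INR n))
  (Heven : Z.Even (Int_part alpha))
  (lambda : R) (Hlam : 1 / 2 <= lambda <= 1)
  (k : nat) (Hk : (1 <= k)%nat) :
  Im (K_sum alpha lambda k) = 0 /\
  Re (K_sum alpha lambda k) <= alpha * Rpower (1 + lambda) (alpha * INR k).
Proof.
  destruct Heven as [m Hm].
  destruct (base_Int_part alpha) as [Hb1 Hb2]. rewrite Hm, mult_IZR in Hb1, Hb2.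
  assert (Hm1 : (1 <= m)%Z). { assert (0 < m)%Z by (apply lt_IZR; simpl; lra). lia. }
  assert (Hne : alpha <> 2 * IZR m).
  { intro E. apply Hnotnat. exists (Z.to_nat (2*m)). rewrite INR_IZR_INZ, Z2Nat.id by lia.
    rewrite mult_IZR. exact E. }
  assert (Ham : 2 * IZR m < alpha < 2 * IZR m + 1) by lra.
  assert (Hm0 : (0 <= m)%Z) by lia.
  assert (HmR : 1 <= IZR m) by (apply IZR_le; lia).
  pose proof PI_RGT_0 as HPI.
  set (a := alpha * INR k).
  assert (Hk1 : 1 <= INR k) by (apply (le_INR 1 k) in Hk; simpl in Hk; exact Hk).
  assert (Ha : alpha <= a) by (unfold a; nra).
  set (th := fun l : Z => 2 * IZR l * PI / alpha).
  set (F := fun l : Z => Defs.Cpow (Cplus (RtoC 1) (Cmult (RtoC lambda) (omega alpha l))) (RtoC a)).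
  assert (HK : K_sum alpha lambda k = fold_right Cplus (RtoC 0) (map F (K_idx alpha))) by reflexivity.
  assert (HF : forall l, F l = Defs.Cpow (1 + lambda * cos (th l), lambda * sin (th l)) (RtoC a)).
  { intro l. unfold F, omega. rewrite z_form. reflexivity. }
  assert (Hth : forall l, (-m <= l <= m)%Z -> -PI < th l < PI).
  { intros l Hl. assert (H1 : IZR (-m) <= IZR l) by (apply IZR_le; lia).
    assert (H2 : IZR l <= IZR m) by (apply IZR_le; lia). rewrite opp_IZR in H1.
    set (r := 2 * IZR l / alpha).
    assert (Hr : r * alpha = 2 * IZR l) by (unfold r; field; lra).
    assert (-1 < r < 1) by nra.
    replace (th l) with (r * PI) by (unfold th, r; field; lra). nra. }
  assert (Hthn : forall l, th (- l)%Z = - th l).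
  { intro l. unfold th. rewrite opp_IZR. field. lra. }
  assert (Hthm : 2 * PI / 3 <= th m <= PI).
  { set (r := 2 * IZR m / alpha).
    assert (Hr : r * alpha = 2 * IZR m) by (unfold r; field; lra).
    assert (2/3 <= r <= 1) by nra.
    replace (th m) with (r * PI) by (unfold th, r; field; lra). nra. }
  assert (Hperm : Permutation (K_idx alpha) (Elist m)).
  { apply NoDup_Permutation; [apply NoDup_K|apply NoDup_E|].
    intro l. rewrite (K_char alpha m Hm0 Ham l), (In_E m l Hm0). tauto. }
  split.
  - rewrite HK, Im_fold, (Rsum_perm _ _ _ Hperm).
    assert (Hp2 : Permutation (Elist m) (map Z.opp (Elist m))).
    { apply NoDup_Permutation; [apply NoDup_E| |].
      - apply FinFun.Injective_map_NoDup; [intros x y H; lia|apply NoDup_E].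
      - intro l. rewrite in_map_iff. rewrite In_E by assumption. split.
        + intro H. exists (- l)%Z. rewrite In_E by assumption. split; lia.
        + intros [y [<- Hy]]. rewrite In_E in Hy by assumption. lia. }
    assert (HS : Rsum (Elist m) (fun l => Im (F l)) = Rsum (Elist m) (fun l => - Im (F l))).
    { rewrite (Rsum_perm _ _ _ Hp2) at 1. rewrite Rsum_map.
      apply Rsum_ext. intros l Hl. rewrite In_E in Hl by assumption.
      rewrite !HF, Hthn. apply Im_odd.
      pose proof (cos_gt_m1 _ (Hth l Hl)). nra. }
    rewrite Rsum_opp in HS. lra.
  - rewrite HK, Re_fold, (Rsum_perm _ _ _ Hperm).
    unfold Rpower. fold a. set (B := exp (a * ln (1 + lambda))).
    assert (HB : 0 < B) by apply exp_pos.
    unfold Elist.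
    replace (Z.to_nat (2*m+1)) with (1 + ((Z.to_nat (2*m) - 1) + 1))%nat by lia.
    rewrite !seq_app, !map_app, !Rsum_app.
    assert (P1 : Rsum (map (fun n : nat => (Z.of_nat n - m)%Z) (seq 0 1)) (fun l => Re (F l)) <= INR 1 * (B/3)).
    { apply piece_le. intros n Hn. replace (Z.of_nat n - m)%Z with (- m)%Z by lia.
      rewrite HF. unfold B. apply Re_le_B3; [lra|lra| |].
      - apply cos_gt_m1, Hth; lia.
      - rewrite Hthn, cos_neg. apply cos_le_half; exact Hthm. }
    assert (P3 : Rsum (map (fun n : nat => (Z.of_nat n - m)%Z) (seq (0 + 1 + (Z.to_nat (2 * m) - 1)) 1)) (fun l => Re (F l)) <= INR 1 * (B/3)).
    { apply piece_le. intros n Hn. replace (Z.of_nat n - m)%Z with m by lia.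
      rewrite HF. unfold B. apply Re_le_B3; [lra|lra| |].
      - apply cos_gt_m1, Hth; lia.
      - apply cos_le_half; exact Hthm. }
    assert (P2 : Rsum (map (fun n : nat => (Z.of_nat n - m)%Z) (seq (0 + 1) (Z.to_nat (2 * m) - 1))) (fun l => Re (F l)) <= INR (Z.to_nat (2 * m) - 1) * B).
    { apply piece_le. intros n Hn.
      rewrite HF. unfold B. apply Re_le_B; [lra|lra|].
      apply cos_gt_m1, Hth; lia. }
    assert (HI : INR (Z.to_nat (2 * m) - 1) = 2 * IZR m - 1).
    { rewrite INR_IZR_INZ. replace (Z.of_nat (Z.to_nat (2 * m) - 1)) with (2 * m - 1)%Z by lia.
      rewrite minus_IZR, mult_IZR. reflexivity. }
    rewrite HI in P2. simpl INR in P1, P3. nra.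
Qed.
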